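(* Neither the sequential fan $S_\omega$ nor Arens' space $S_2$ is self-selective.
   Context: For spaces $Y$, $X$, a map $\varphi:Y\to\mathcal P(X)\setminus\{\emptyset\}$ is lower semicontinuous (l.s.c.) if $\{y:\varphi(y)\cap U\neq\emptyset\}$ is open in $Y$ for every open $U\subseteq X$; a selection is a map $f:Y\to X$ with $f(y)\in\varphi(y)$ for all $y$. A space $X$ is self-selective if every l.s.c. map from $X$ to the nonempty closed subsets of $X$ has a continuous selection. The sequential fan $S_\omega$ is the quotient of the topological sum of countably many convergent sequences (with limits) obtained by identifying all limit points. Arens' space $S_2=\{x\}\cup\{x_n:n\in\omega\}\cup\{x_{n,m}:n,m\in\omega\}$: each $x_{n,m}$ is isolated; a neighborhood base at $x_n$ consists of the sets $\{x_n\}\cup\{x_{n,m}:m\in\omega\setminus K\}$, $K$ finite; a neighborhood base at $x$ consists of the sets $\{x\}\cup\{x_n:n\in\omega\setminus K\}\cup\{x_{n,m}:n\in\omega\setminus K,\ m>f(n)\}$ with $K$ finite and $f:\omega\to\omega$. *)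

(* Defs.v *)
From Stdlib Require Import Arith List.
Import ListNotations.

Definition opens (X : Type) := (X -> Prop) -> Prop.

Definition is_topology {X : Type} (O : opens X) : Prop :=
  O (fun _ => True) /\
  (forall U V, O U -> O V -> O (fun x => U x /\ V x)) /\
  (forall (I : Type) (F : I -> X -> Prop), (forall i, O (F i)) ->
      O (fun x => exists i, F i x)).

Definition is_closed {X : Type} (O : opens X) (A : X -> Prop) : Prop :=
  O (fun x => ~ A x).

Definition continuous {Y X : Type} (OY : opens Y) (OX : opens X) (f : Y -> X) : Prop :=
  forall U, OX U -> OY (fun y => U (f y)).

Definition lsc {Y X : Type} (OY : opens Y) (OX : opens X) (phi : Y -> X -> Prop) : Prop :=
  forall U, OX U -> OY (fun y => exists x, phi y x /\ U x).

Definition self_selective {X : Type} (O : opens X) : Prop :=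
  forall phi : X -> X -> Prop,
    (forall x, exists z, phi x z) ->
    (forall x, is_closed O (phi x)) ->
    lsc O O phi ->
    exists f : X -> X, continuous O O f /\ forall x, phi x (f x).

(* None = the (identified) limit point; Some (n, m) = m-th term of the n-th sequence. *)
Definition Sfan := option (nat * nat).

(* Quotient topology: U is open iff, when it contains the common limit, it contains
   a tail of every sequence (all sequence terms are isolated). *)
Definition Sfan_open : opens Sfan := fun U =>
  U None -> forall n, exists k, forall m, k <= m -> U (Some (n, m)).

Inductive Arens : Type :=
| a_pt : Arens
| a_row : nat -> Arens
| a_cell : nat -> nat -> Arens.

Definition arens_nbhd_row (n : nat) (K : list nat) : Arens -> Prop := fun z =>
  z = a_row n \/ exists m, ~ In m K /\ z = a_cell n m.

Definition arens_nbhd_pt (K : list nat) (f : nat -> nat) : Arens -> Prop := fun z =>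
  z = a_pt \/ (exists n, ~ In n K /\ z = a_row n) \/
  (exists n m, ~ In n K /\ f n < m /\ z = a_cell n m).

Definition Arens_open : opens Arens := fun U =>
  (U a_pt -> exists K f, forall z, arens_nbhd_pt K f z -> U z) /\
  (forall n, U (a_row n) -> exists K, forall z, arens_nbhd_row n K z -> U z).

(* Main.v *)
Require Import Defs.
From Stdlib Require Import Arith List Lia Classical IndefiniteDescription Cantor.
Import ListNotations.

Definition KK (m : nat) : nat := fst (Cantor.of_nat m).

Lemma KK_inf : forall K B, exists m, B <= m /\ KK m = K.
Proof.
  intros K B. exists (Cantor.to_nat (K, B)). unfold KK. rewrite Cantor.cancel_of_to.
  split; [|reflexivity]. pose proof (Cantor.to_nat_non_decreasing K B). lia.
Qed.

Definition FF (m : nat) (z : Sfan) : Prop :=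
  match z with
  | None => False
  | Some (k, j) => (k <= KK m /\ j = KK m) \/ (KK m < k /\ j = m)
  end.

Definition fan_phi (y : Sfan) : Sfan -> Prop :=
  match y with
  | None => fun z => z = None
  | Some (_, m) => FF m
  end.

Definition rowf (z : Sfan) : nat := match z with Some (_, j) => j | None => 0 end.
Definition colf (z : Sfan) : nat := match z with Some (k, _) => k | None => 0 end.

Fixpoint maxupto (g : nat -> nat) (k : nat) : nat :=
  match k with 0 => 0 | S k => Nat.max (maxupto g k) (g k) end.

Lemma maxupto_ge g k K : K < k -> g K <= maxupto g k.
Proof. induction k; simpl; intros H; [lia|]. destruct (Nat.eq_dec K k); subst; [lia|].
  specialize (IHk ltac:(lia)). lia. Qed.

Lemma fan_not : ~ self_selective Sfan_open.
Proof.
  intros H. destruct (H fan_phi) as [f [Hc Hs]].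
  - intros [[n m]|]; simpl; [|eauto]. exists (Some (0, KK m)). simpl. left; split; [lia|reflexivity].
  - intros [[n m]|]; unfold is_closed, Sfan_open; simpl.
    + intros _ c. exists (S (KK m + m)). intros j Hj Hf. lia.
    + intros Hx. exfalso; apply Hx; reflexivity.
  - intros U HU Hn n. destruct Hn as [x [Hx Ux]]. simpl in Hx. subst x.
    pose proof (HU Ux) as HT.
    destruct (HT 0) as [a0 Ha0].
    assert (Hind : forall A, exists m0, forall c, c < A -> forall j, m0 <= j -> U (Some (S c, j))).
    { induction A as [|A [m0 Hm0]]; [exists 0; intros; lia|].
      destruct (HT (S A)) as [t Ht]. exists (Nat.max m0 t). intros c Hc j Hj.
      destruct (Nat.eq_dec c A); [subst; apply Ht; lia|]. apply Hm0; lia. }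
    destruct (Hind a0) as [m0 Hm0]. exists m0. intros m Hm. simpl.
    destruct (le_lt_dec a0 (KK m)) as [Hle|Hlt].
    + exists (Some (0, KK m)). split; [left; split; [lia|reflexivity]|]. apply Ha0; exact Hle.
    + exists (Some (S (KK m), m)). split; [right; split; [lia|reflexivity]|]. apply Hm0; lia.
  - assert (Hp : f None = None) by exact (Hs None).
    set (x := fun m => f (Some (0, m))).
    assert (Hx : forall m, FF m (x m)) by (intros m; exact (Hs (Some (0, m)))).
    assert (Key : forall U, Sfan_open U -> U None -> exists M, forall m, M <= m -> U (x m)).
    { intros U HU Un. pose proof (Hc U HU) as HO. unfold Sfan_open in HO.
      rewrite Hp in HO. destruct (HO Un 0) as [M HM]. exists M. exact HM. }
    assert (Step1 : forall c j, exists M, forall m, M <= m -> x m <> Some (c, j)).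
    { intros c j. apply (Key (fun z => z <> Some (c, j))); [|discriminate].
      intros _ n. exists (S j). intros m Hm E. injection E; lia. }
    assert (Step2 : forall K C, exists M, forall m, M <= m -> forall c, c <= C -> x m <> Some (c, K)).
    { intros K C. induction C as [|C [M HM]].
      - destruct (Step1 0 K) as [M HM]. exists M. intros m Hm c Hc0.
        assert (c = 0) by lia. subst. apply HM; exact Hm.
      - destruct (Step1 (S C) K) as [M' HM']. exists (Nat.max M M'). intros m Hm c Hc0.
        destruct (Nat.eq_dec c (S C)); [subst; apply HM'; lia|]. apply HM; lia. }
    assert (Step3 : forall K, exists M, forall m, M <= m -> KK m = K ->
                     exists c j, x m = Some (c, j) /\ K < c).
    { intros K. destruct (Step2 K K) as [M HM]. exists M. intros m Hm HK.
      pose proof (Hx m) as Hxm. destruct (x m) as [[c j]|] eqn:E; [|contradiction].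
      exists c, j. split; [reflexivity|]. simpl in Hxm. rewrite HK in Hxm.
      destruct Hxm as [[Hc1 Hj]|[Hc1 Hj]]; [|exact Hc1].
      subst j. exfalso. exact (HM m Hm c Hc1 E). }
    destruct (functional_choice _ Step3) as [g Hg].
    assert (Hm : forall K, exists m, Nat.max (g K) K <= m /\ KK m = K) by (intros K; apply KK_inf).
    destruct (functional_choice _ Hm) as [h Hh].
    set (U := fun z => match z with None => True
                       | Some (k, j) => forall m, m <= maxupto h k -> x m <> Some (k, j) end).
    assert (HU : Sfan_open U).
    { intros _ n.
      assert (Hb : forall B, exists k0, forall j, k0 <= j -> forall m, m <= B -> x m <> Some (n, j)).
      { induction B as [|B [k0 Hk0]].
        - exists (S (rowf (x 0))). intros j Hj m Hm0 E. assert (m = 0) by lia. subst m.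
          rewrite E in Hj. simpl in Hj. lia.
        - exists (Nat.max k0 (S (rowf (x (S B))))). intros j Hj m Hm0 E.
          destruct (Nat.eq_dec m (S B)).
          + subst m. rewrite E in Hj. simpl in Hj. lia.
          + apply (Hk0 j ltac:(lia) m ltac:(lia) E). }
      destruct (Hb (maxupto h n)) as [k0 Hk0]. exists k0. intros j Hj. simpl. exact (Hk0 j Hj). }
    destruct (Key U HU I) as [M HM].
    destruct (Hh M) as [Hh1 Hh2].
    specialize (HM (h M) ltac:(lia)).
    destruct (Hg M (h M) ltac:(lia) Hh2) as [c [j [E Hc1]]].
    rewrite E in HM. simpl in HM.
    apply (HM (h M)); [apply maxupto_ge; exact Hc1|exact E].
Qed.

Lemma list_bound (K : list nat) : exists M, forall m, M <= m -> ~ In m K.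
Proof.
  induction K as [|a K [M HM]]; [exists 0; simpl; tauto|].
  exists (S (a + M)); intros m Hm [->|H]; [lia|]. apply (HM m); [lia|exact H].
Qed.

Definition rowof (z : Arens) : nat := match z with a_cell n _ => n | _ => 0 end.

Definition ar_phi (y : Arens) : Arens -> Prop :=
  match y with
  | a_row 0 => fun z => z = a_pt
  | a_cell 0 m => fun z => exists n, n <= m /\ z = a_cell n m
  | _ => fun _ => True
  end.

Lemma arens_not : ~ self_selective Arens_open.
Proof.
  intros H. destruct (H ar_phi) as [f [Hc Hs]].
  - intros y. destruct y as [|[|n]|[|n] m]; simpl; eauto; exists a_pt; exact I.
  - intros y. destruct y as [|[|n]|[|n] m]; unfold is_closed; simpl.
    + split; [intros []; exact I| intros n []; exact I].
    + split; [intros Hx; exfalso; apply Hx; reflexivity|].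
      intros n _. exists []. intros z [->|[m' [_ ->]]]; discriminate.
    + split; [intros []; exact I| intros n0 []; exact I].
    + split.
      * intros _. exists [], (fun _ => m). intros z [->|[[n [_ ->]]|[n [m' [_ [Hl ->]]]]]];
          intros [n' [_ E]]; try discriminate. injection E; lia.
      * intros n _. exists [m]. intros z [->|[m' [Hm ->]]]; intros [n' [_ E]]; try discriminate.
        injection E; intros; subst; apply Hm; simpl; auto.
    + split; [intros []; exact I| intros n0 []; exact I].
  - intros U HU. destruct (classic (exists u, U u)) as [[u Hu]|Hne].
    + split.
      * intros _. exists [0], (fun _ => 0).
        intros z [->|[[n [Hn ->]]|[n [m [Hn [_ ->]]]]]].
        -- exists u; split; [exact I|exact Hu].
        -- destruct n as [|n]; [exfalso; apply Hn; simpl; auto|]. exists u; split; [exact I|exact Hu].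
        -- destruct n as [|n]; [exfalso; apply Hn; simpl; auto|]. exists u; split; [exact I|exact Hu].
      * intros n Hn. destruct n as [|n].
        -- destruct Hn as [x [Hx Ux]]. simpl in Hx. subst x.
           destruct (proj1 HU Ux) as [K [g Hg]]. destruct (list_bound K) as [M HM].
           exists (seq 0 (S (M + g M))). intros z [->|[m [Hm ->]]].
           ++ exists a_pt. split; [reflexivity|exact Ux].
           ++ assert (Hm' : M + g M < m).
              { destruct (le_lt_dec m (M + g M)) as [Hle|Hlt]; [|exact Hlt].
                exfalso; apply Hm. apply in_seq. lia. }
              exists (a_cell M m). split.
              ** exists M. split; [lia|reflexivity].
              ** apply Hg. right; right. exists M, m. split; [apply HM; lia|]. split; [lia|reflexivity].
        -- exists []. intros z [->|[m [_ ->]]]; exists u; split; [exact I|exact Hu|exact I|exact Hu].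
    + split.
      * intros [x [_ Hx]]. exfalso; apply Hne; eauto.
      * intros n [x [_ Hx]]. exfalso; apply Hne; eauto.
  - assert (Hp : f (a_row 0) = a_pt) by exact (Hs (a_row 0)).
    set (r := fun m => rowof (f (a_cell 0 m))).
    assert (Hcell : forall m, f (a_cell 0 m) = a_cell (r m) m).
    { intros m. destruct (Hs (a_cell 0 m)) as [n [_ E]]. unfold r. rewrite E. reflexivity. }
    assert (Key : forall U, Arens_open U -> U a_pt -> exists M, forall m, M <= m -> U (f (a_cell 0 m))).
    { intros U HU Ua. destruct (proj2 (Hc U HU) 0) as [K HK].
      - simpl. rewrite Hp. exact Ua.
      - destruct (list_bound K) as [M HM]. exists M. intros m Hm. apply HK. right. exists m. split; [apply HM; exact Hm|reflexivity]. }
    destruct (classic (exists n, forall M, exists m, M <= m /\ r m = n)) as [[n Hn]|HB].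
    + set (U := fun z => match z with a_pt => True | a_row k => k <> n | a_cell k _ => k <> n end).
      assert (HU : Arens_open U).
      { split.
        - intros _. exists [n], (fun _ => 0).
          intros z [->|[[k [Hk ->]]|[k [m [Hk [_ ->]]]]]]; simpl; auto; intro; subst; apply Hk; simpl; auto.
        - intros k Hk. exists []. intros z [->|[m [_ ->]]]; simpl; auto. }
      destruct (Key U HU I) as [M HM]. destruct (Hn M) as [m [Hm Hr]].
      specialize (HM m Hm). rewrite Hcell in HM. simpl in HM. exact (HM Hr).
    + assert (HB' : forall n, exists M, forall m, M <= m -> r m <> n).
      { intros n; apply NNPP; intro H1; apply HB; exists n; intros M; apply NNPP; intro H2;
        apply H1; exists M; intros m Hm Hr; apply H2; eauto. }
      destruct (functional_choice _ HB') as [g Hg].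
      set (U := fun z => match z with a_cell k j => r j <> k | _ => True end).
      assert (HU : Arens_open U).
      { split.
        - intros _. exists [], g.
          intros z [->|[[k [Hk ->]]|[k [m [Hk [Hl ->]]]]]]; simpl; auto. apply Hg; lia.
        - intros k Hk. exists (seq 0 (S (g k))). intros z [->|[m [Hm ->]]]; simpl; auto.
          apply Hg. destruct (le_lt_dec m (g k)) as [Hle|Hlt]; [|lia].
          exfalso; apply Hm. apply in_seq. lia. }
      destruct (Key U HU I) as [M HM]. specialize (HM M (le_n M)).
      rewrite Hcell in HM. simpl in HM. exact (HM eq_refl).
Qed.

Theorem mainTheorem18 :
  ~ self_selective Sfan_open /\ ~ self_selective Arens_open.
Proof. split; [exact fan_not | exact arens_not]. Qed.
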